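(* Let $n$ be an integer and let \[ L(n) = p(n) + \sum_{j\geq 1} (-1)^j\Big( p\big(n-j(3j-2)\big) + p\big(n-j(3j+2)\big)\Big) = p(n) - p(n-1) - p(n-5) + p(n-8) + p(n-16) - p(n-21) - p(n-33) + \cdots. \] For $i\geq 1$ let $t^e_i = \frac{(2i-1)(2i-1+(-1)^i)}{2}$ be the $i$th even triangular number ($0, 6, 10, 28, \dots$) and $t^o_i = \frac{(2i-1)(2i-1-(-1)^i)}{2}$ the $i$th odd triangular number ($1,3,15,21,\dots$). If $n$ is even, then \[ L(n) = \sum_{i\geq 1} p\!\left(\frac{n-3t^e_i}{2}\right), \] and if $n$ is odd, then \[ L(n) = \sum_{i\geq 1} p\!\left(\frac{n-3t^o_i}{2}\right). \]
   Context: $p(m)$ denotes the number of partitions of the integer $m$, with $p(0)=1$ and $p(m)=0$ for $m<0$ (so all sums above are finite). Triangular numbers are the numbers $k(k+1)/2$, $k\geq 0$ (including $0$). *)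

(* Defs.v *)
From HB Require Import structures.
From mathcomp Require Import all_boot all_order all_algebra.
Set Implicit Arguments. Unset Strict Implicit. Unset Printing Implicit Defensive.
Import Order.TTheory GRing.Theory Num.Theory.

(* A partition of m is encoded by its multiplicity vector: f i = number of
   parts equal to i+1 (every part is <= m and occurs at most m times). *)
Definition npartitions (m : nat) : nat :=
  #|[set f : {ffun 'I_m -> 'I_m.+1} | (\sum_(i < m) i.+1 * f i == m)%N]|.

Definition p (m : int) : nat :=
  match m with Posz k => npartitions k | Negz _ => 0%N end.

Local Open Scope ring_scope.

Definition te (i : nat) : int :=
  divz ((2 * i%:Z - 1) * (2 * i%:Z - 1 + (-1) ^+ i)) 2.
Definition to (i : nat) : int :=
  divz ((2 * i%:Z - 1) * (2 * i%:Z - 1 - (-1) ^+ i)) 2.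

Definition L_partial (N : nat) (n : int) : int :=
  (p n)%:Z + \sum_(1 <= j < N.+1)
     (-1) ^+ j * ((p (n - j%:Z * (3 * j%:Z - 2)))%:Z
                  + (p (n - j%:Z * (3 * j%:Z + 2)))%:Z).

Definition R_partial (t : nat -> int) (N : nat) (n : int) : int :=
  \sum_(1 <= i < N.+1) ((p (divz (n - 3 * t i) 2))%:Z).

Goal [seq te i | i <- iota 1 4] = [:: 0; 6; 10; 28]. Proof. by []. Qed.
Goal [seq to i | i <- iota 1 4] = [:: 1; 3; 15; 21]. Proof. by []. Qed.

(* Main.v *)
Require Import Defs.
From HB Require Import structures.
From mathcomp Require Import all_boot all_order all_algebra.
From mathcomp Require Import zify ring.
Import Order.TTheory GRing.Theory Num.Theory.
Local Open Scope ring_scope.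
Set Implicit Arguments. Unset Strict Implicit. Unset Printing Implicit Defensive.

Definition low (k : nat) (a : {poly int}) := forall i, (i < k)%N -> a`_i = 0.
Definition eqm (M : nat) (a b : {poly int}) := low M (a - b).

Lemma low_mul k l a b : low k a -> low l b -> low (k + l) (a * b).
Proof.
move=> Ha Hb i lt; rewrite coefM big1 // => j _.
case: (ltnP j k) => h; first by rewrite Ha // mul0r.
rewrite Hb ?mulr0 //; have := ltn_ord j; lia.
Qed.

Lemma low_mono k k' a : (k <= k')%N -> low k' a -> low k a.
Proof. by move=> h H i lt; apply: H; lia. Qed.

Lemma low_mulr k a b : low k a -> low k (a * b).
Proof. move=> H; rewrite -[k]addn0; apply: low_mul => // i; by []. Qed.

Lemma low_mull k a b : low k b -> low k (a * b).
Proof. by move=> H; rewrite mulrC; apply: low_mulr. Qed.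

Lemma low0 k : low k 0.
Proof. by move=> i _; rewrite coef0. Qed.

Lemma lowD k a b : low k a -> low k b -> low k (a + b).
Proof. by move=> Ha Hb i lt; rewrite coefD Ha ?Hb ?addr0. Qed.

Lemma lowN k a : low k a -> low k (- a).
Proof. by move=> Ha i lt; rewrite coefN Ha ?oppr0. Qed.

Lemma lowB k a b : low k a -> low k b -> low k (a - b).
Proof. by move=> Ha Hb; apply: lowD => //; apply: lowN. Qed.

Lemma low_exp a n : low 1 a -> low n (a ^+ n).
Proof.
move=> H; elim: n => [|n IH]; first by move=> i.
by rewrite exprS -add1n; apply: low_mul.
Qed.

Lemma lowXn k : low k ('X^k : {poly int}).
Proof. by move=> i lt; rewrite coefXn; case: eqP => // e; lia. Qed.

Lemma low1Xn k : (0 < k)%N -> low 1 ('X^k : {poly int}).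
Proof. by move=> h; apply: (@low_mono 1 k) => //; apply: lowXn. Qed.

Lemma low1NXn k : (0 < k)%N -> low 1 (- 'X^k : {poly int}).
Proof. by move=> h; apply/lowN/low1Xn. Qed.

Lemma eqm_refl M a : eqm M a a.
Proof. rewrite /eqm subrr; exact: low0. Qed.

Lemma eqm_sym M a b : eqm M a b -> eqm M b a.
Proof. by move=> H; rewrite /eqm -opprB; apply: lowN. Qed.

Lemma eqm_trans M a b c : eqm M a b -> eqm M b c -> eqm M a c.
Proof.
move=> H1 H2; rewrite /eqm.
have -> : a - c = (a - b) + (b - c) by ring.
exact: lowD.
Qed.

Lemma eqmD M a b c d : eqm M a b -> eqm M c d -> eqm M (a + c) (b + d).
Proof.
move=> H1 H2; rewrite /eqm.
have -> : a + c - (b + d) = (a - b) + (c - d) by ring.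
exact: lowD.
Qed.

Lemma eqmN M a b : eqm M a b -> eqm M (- a) (- b).
Proof.
move=> H1; rewrite /eqm.
have -> : - a - - b = - (a - b) by ring.
exact: lowN.
Qed.

Lemma eqmM M a b c d : eqm M a b -> eqm M c d -> eqm M (a * c) (b * d).
Proof.
move=> H1 H2; rewrite /eqm.
have -> : a * c - b * d = (a - b) * c + b * (c - d) by ring.
by apply: lowD; [apply: low_mulr | apply: low_mull].
Qed.

Lemma eqm_mono M M' a b : (M <= M')%N -> eqm M' a b -> eqm M a b.
Proof. by move=> h; apply: low_mono. Qed.

Lemma eqm0 M a : low M a -> eqm M a 0.
Proof. by rewrite /eqm subr0. Qed.

Lemma eqm_coef M a b i : eqm M a b -> (i < M)%N -> a`_i = b`_i.
Proof. by move=> H lt; apply/eqP; rewrite -subr_eq0 -coefB H. Qed.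

Lemma eqm_inv M E : low 1 (1 - E) -> exists V, eqm M (E * V) 1.
Proof.
move=> H; exists (\sum_(i < M) (1 - E) ^+ i).
have e := subrX1 (1 - E) M.
rewrite /eqm.
have e' : (1 - E) ^+ M = ((1 - E) - 1) * (\sum_(i < M) (1 - E) ^+ i) + 1
  by rewrite -e subrK.
have -> : E * (\sum_(i < M) (1 - E) ^+ i) - 1 = - ((1 - E) ^+ M) by
  rewrite e'; ring.
by apply/lowN/low_exp.
Qed.

Lemma eqm_cancel M E a b : low 1 (1 - E) -> eqm M (a * E) (b * E) -> eqm M a b.
Proof.
move=> H1 H2; have [V HV] := @eqm_inv M E H1.
have h1 : eqm M (a * E * V) (b * E * V) by apply: eqmM => //; apply: eqm_refl.
rewrite -!mulrA in h1.
have ha : eqm M (a * (E * V)) a.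
  by have := eqmM (@eqm_refl M a) HV; rewrite mulr1.
have hb : eqm M (b * (E * V)) b.
  by have := eqmM (@eqm_refl M b) HV; rewrite mulr1.
exact: eqm_trans (eqm_sym ha) (eqm_trans h1 hb).
Qed.

Definition pr (a b : {poly int}) (T : nat) := \prod_(t < T) (1 + a * b ^+ t).

Lemma eqm_mul1 M x y z : eqm M x y -> low M z -> eqm M (x * (1 + z)) y.
Proof.
move=> H1 H2; rewrite /eqm.
have -> : x * (1 + z) - y = (x - y) + x * z by ring.
by apply: lowD => //; apply: low_mull.
Qed.

Lemma pr_trunc M a b T T' : low 1 a -> low 1 b -> (M <= T.+1)%N -> (T <= T')%N ->
  eqm M (pr a b T') (pr a b T).
Proof.
move=> Ha Hb hM; elim: T' => [|T' IH] hT.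
  have -> : T = 0%N by lia. exact: eqm_refl.
case: (ltnP T T'.+1) => h; last first.
  have -> : T = T'.+1 by lia. exact: eqm_refl.
rewrite /pr big_ord_recr /=; apply: eqm_mul1; first by apply: IH; lia.
apply: (low_mono (k' := 1 + T')); first by lia.
by apply: low_mul => //; apply: low_exp.
Qed.

Lemma pr_low1 a b T : low 1 a -> low 1 (1 - pr a b T).
Proof.
move=> Ha; elim: T => [|T IH]; first by rewrite /pr big_ord0 subrr; apply: low0.
rewrite /pr big_ord_recr /=.
set P := \prod_(i < T) _.
have -> : 1 - P * (1 + a * b ^+ T) = (1 - P) - P * (a * b ^+ T) by ring.
by apply: lowB => //; apply/low_mull/low_mulr.
Qed.

Fixpoint qbin (Q : {poly int}) (n i : nat) {struct n} : {poly int} :=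
  match n, i with
  | 0, 0 => 1
  | 0, _.+1 => 0
  | n'.+1, 0 => 1
  | n'.+1, i'.+1 => qbin Q n' i'.+1 + Q ^+ (n' - i') * qbin Q n' i'
  end.

Lemma qbin_gt Q n i : (n < i)%N -> qbin Q n i = 0.
Proof.
elim: n i => [|n IH] [|i] //= h.
by rewrite !IH ?mulr0 ?addr0 //; lia.
Qed.

Lemma qbin_nn Q n : qbin Q n n = 1.
Proof. by elim: n => [|n IH] //=; rewrite qbin_gt // subnn expr0 mul1r add0r. Qed.

Lemma qbin_n0 Q n : qbin Q n 0 = 1.
Proof. by case: n. Qed.

Lemma binS2 i : 'C(i.+1, 2) = ('C(i, 2) + i)%N.
Proof. by rewrite binS bin1 addnC. Qed.

Lemma rothe (Q a b : {poly int}) n :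
  \prod_(k < n) (a + b * Q ^+ k) =
  \sum_(i < n.+1) qbin Q n i * Q ^+ 'C(i, 2) * a ^+ (n - i) * b ^+ i.
Proof.
elim: n => [|n IH].
  by rewrite big_ord0 big_ord1 /= !expr0 !mulr1.
rewrite big_ord_recr /= IH mulrDr !big_distrl /=.
rewrite [in RHS]big_ord_recl /= /bump /=.
have -> : \sum_(i < n.+1)
     (qbin Q n (0 + i).+1 + Q ^+ (n - (0 + i)) * qbin Q n (0 + i)) *
     Q ^+ 'C((0 <= i) + i, 2) * a ^+ (n.+1 - ((0 <= i) + i)) * b ^+ ((0 <= i) + i) =
  \sum_(i < n.+1) (qbin Q n i.+1 * Q ^+ 'C(i.+1, 2) * a ^+ (n - i) * b ^+ i.+1) +
  \sum_(i < n.+1) (Q ^+ (n - i) * qbin Q n i * Q ^+ 'C(i.+1, 2) * a ^+ (n - i) * b ^+ i.+1).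
  rewrite -big_split /=; apply: eq_bigr => i _; rewrite add0n subSS; ring.
rewrite big_ord_recl /= qbin_n0 subn0 -addrA; congr (_ + _).
  by rewrite !expr0 !mulr1 exprS; ring.
congr (_ + _).
  rewrite [in RHS]big_ord_recr /= qbin_gt // !mul0r addr0.
  apply: eq_bigr => i _; rewrite /bump /=.
  have hi := ltn_ord i.
  have -> : (n - i = (n - i.+1).+1)%N by lia.
  by rewrite exprS; ring.
apply: eq_bigr => i _.
have hi := ltn_ord i.
rewrite binS2 exprS exprD.
have -> : Q ^+ n = Q ^+ (n - i) * Q ^+ i by rewrite -exprD subnK //; lia.
ring.
Qed.

Lemma pr_S a b k : pr a b k.+1 = pr a b k * (1 + a * b ^+ k).
Proof. by rewrite /pr big_ord_recr. Qed.

Lemma pr_0 a b : pr a b 0 = 1.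
Proof. by rewrite /pr big_ord0. Qed.

Lemma qbin_prod Q n i : (i <= n)%N ->
  qbin Q n i * pr (- Q) Q i * pr (- Q) Q (n - i) = pr (- Q) Q n.
Proof.
elim: n i => [|n IH] [|j] //= h.
- by rewrite !pr_0 !mulr1.
- by rewrite subn0 pr_0 mul1r mul1r.
case: (ltnP j n) => hj; last first.
  have ej : j = n by lia.
  subst j; rewrite qbin_gt // qbin_nn subnn subSS subnn !pr_0; ring.
have h1 := IH j.+1 hj.
have h2 := IH j (ltnW hj).
rewrite subSS.
set d := (n - j.+1)%N.
have e1 : (n - j = d.+1)%N by rewrite /d; lia.
have en : n = (d + j).+1 by rewrite /d; lia.
rewrite e1 in h2 *.
rewrite /= -/d in h1.
rewrite !pr_S.
set A := qbin Q n j.+1 in h1 *.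
set B := qbin Q n j in h2 *.
set pj := pr (- Q) Q j in h1 h2 *.
set pd := pr (- Q) Q d in h1 h2 *.
rewrite pr_S in h1; rewrite pr_S -/pd in h2.
have -> : (A + Q ^+ d.+1 * B) * (pj * (1 + - Q * Q ^+ j)) * (pd * (1 + - Q * Q ^+ d))
   = (A * (pj * (1 + - Q * Q ^+ j)) * pd) * (1 + - Q * Q ^+ d) +
     Q ^+ d.+1 * (B * pj * (pd * (1 + - Q * Q ^+ d))) * (1 + - Q * Q ^+ j) by ring.
rewrite h1 h2 en !exprS exprD. ring.
Qed.

Lemma bin2D a b : 'C(a + b, 2) = ('C(a, 2) + 'C(b, 2) + a * b)%N.
Proof.
elim: b => [|b IH]; first by rewrite addn0 bin0n /=; lia.
rewrite addnS !binS2 IH; lia.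
Qed.

Lemma qbin_lim Q n i M : low 1 Q -> (i <= n)%N -> (M <= i)%N -> (M <= n - i)%N ->
  eqm M (pr (- Q) Q M * qbin Q n i) 1.
Proof.
move=> hQ hin h1 h2.
have hQ' : low 1 (- Q) by apply: lowN.
have e := qbin_prod Q hin.
have t1 := pr_trunc hQ' hQ (leqnSn M) h1.
have t2 := pr_trunc hQ' hQ (leqnSn M) h2.
have t3 := pr_trunc hQ' hQ (leqnSn M) (leq_trans h1 hin).
set E := pr (- Q) Q M in t1 t2 t3 *.
have h : eqm M (qbin Q n i * E * E) E.
  apply: eqm_trans t3; rewrite -e.
  by apply: eqmM; [apply: eqmM; [apply: eqm_refl | apply: eqm_sym] | apply: eqm_sym].
apply: (@eqm_cancel M E _ _ (pr_low1 _ _ hQ')).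
by rewrite mul1r (mulrC E); exact: h.
Qed.

Lemma bin2x2 x : ('C(x, 2) * 2 = x * x.-1)%N.
Proof. elim: x => [|x IH] //; rewrite binS2; case: x IH => [|x] //= IH; nia. Qed.

Lemma natA m k : (k < m)%N ->
  ('C(m - k.+1, 2) + m * (m + m - (m - k.+1)))%N = ('C(m, 2) + m * m + 'C(k.+2, 2))%N.
Proof.
move=> hk; set d := (m - k.+1)%N; have em : m = (d + k.+1)%N by rewrite /d; lia.
clearbody d; subst m.
rewrite (_ : (d + k.+1 + (d + k.+1) - d = d + k.+1 + k.+1)%N); last by lia.
have h1 := binS2 k.+1; have h2 := bin2x2 k.+1; have h3 := bin2D d k.+1.
simpl in h2; nia.
Qed.

Lemma natB m k : (k < m)%N ->
  ('C(m - k.+1, 2) + m * (m + m - (m - k.+1)) + (m - k.+1))%N =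
  ('C(m, 2) + m + m * m + 'C(k.+1, 2))%N.
Proof.
move=> hk; set d := (m - k.+1)%N; have em : m = (d + k.+1)%N by rewrite /d; lia.
clearbody d; subst m.
rewrite (_ : (d + k.+1 + (d + k.+1) - d = d + k.+1 + k.+1)%N); last by lia.
have h2 := bin2x2 k.+1; have h3 := bin2D d k.+1.
simpl in h2; nia.
Qed.

Lemma pw_split (u w : {poly int}) A B A' B' X :
  A = A' -> B = B' -> X * u ^+ A * w ^+ B = X * u ^+ A' * w ^+ B'.
Proof. by move=> -> ->. Qed.

Section FJ.
Variables u w : {poly int}.
Hypothesis huw : u * w != 0.
Hypothesis hw : w != 0.

Lemma finite_jtp m :
  pr u (u * w) m * pr w (u * w) m =
  \sum_(j < m.+1) qbin (u * w) (m + m) (j + m) * u ^+ 'C(j, 2) * w ^+ 'C(j.+1, 2) +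
  \sum_(l < m) qbin (u * w) (m + m) (m - l.+1) * u ^+ 'C(l.+2, 2) * w ^+ 'C(l.+1, 2).
Proof.
set Q := u * w.
have R := rothe Q (Q ^+ m) w (m + m).
set K := Q ^+ 'C(m, 2) * w ^+ m * (Q ^+ m) ^+ m.
have hK : K != 0 by rewrite /K !mulf_neq0 // expf_neq0 // expf_neq0.
apply: (mulfI hK).
have L1 : \prod_(k < m + m) (Q ^+ m + w * Q ^+ k) = K * (pr u Q m * pr w Q m).
  rewrite big_split_ord /=.
  have -> : \prod_(i < m) (Q ^+ m + w * Q ^+ i) =
            \prod_(i < m) (Q ^+ i * w * (1 + u * Q ^+ (m - i.+1))).
    apply: eq_bigr => i _; have hi := ltn_ord i.
    have em : m = (i + (m - i.+1)).+1 by lia.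
    by rewrite {1}em exprS exprD /Q; ring.
  have -> : \prod_(i < m) (Q ^+ m + w * Q ^+ (m + i)) =
            \prod_(i < m) (Q ^+ m * (1 + w * Q ^+ i)).
    by apply: eq_bigr => i _; rewrite exprD; ring.
  rewrite !big_split /= prodrXr !prodr_const card_ord.
  have -> : (\sum_(i < m) (i : nat))%N = 'C(m, 2) by rewrite -bin2_sum big_mkord.
  have -> : \prod_(i < m) (1 + u * Q ^+ (m - i.+1)) = pr u Q m.
    rewrite /pr (reindex_inj rev_ord_inj) /=; apply: eq_bigr => i _.
    have hi := ltn_ord i.
    by rewrite subnSK // subKn //; lia.
  rewrite /pr /K; ring.
rewrite -L1 R.
pose F := fun i : nat => qbin Q (m + m) i * Q ^+ 'C(i, 2) * (Q ^+ m) ^+ (m + m - i) * w ^+ i.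
rewrite -(big_mkord xpredT F) (big_cat_nat _ (n := m)) //=; last by lia.
rewrite big_nat_rev /= (big_addn 0 _ m).
have -> : ((m + m).+1 - m = m.+1)%N by lia.
rewrite !big_mkord mulrDr addrC !big_distrr /=; congr (_ + _); apply: eq_bigr => i _.
  have hi := ltn_ord i.
  rewrite /F /K /Q -!exprM !exprMn.
  transitivity (qbin (u * w) (m + m) (i + m) * u ^+ ('C(i + m, 2) + m * (m + m - (i + m)))
     * w ^+ ('C(i + m, 2) + m * (m + m - (i + m)) + (i + m))).
    by rewrite !exprD; ring.
  transitivity (qbin (u * w) (m + m) (i + m) * u ^+ ('C(m, 2) + m * m + 'C(i, 2))
     * w ^+ ('C(m, 2) + m + m * m + 'C(i.+1, 2))); last by rewrite !exprD; ring.
  apply: pw_split; rewrite ?binS2 bin2D; nia.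
have hi := ltn_ord i.
rewrite /F add0n /K /Q -!exprM !exprMn.
transitivity (qbin (u * w) (m + m) (m - i.+1) * u ^+ ('C(m - i.+1, 2) + m * (m + m - (m - i.+1)))
     * w ^+ ('C(m - i.+1, 2) + m * (m + m - (m - i.+1)) + (m - i.+1))).
  by rewrite !exprD; ring.
transitivity (qbin (u * w) (m + m) (m - i.+1) * u ^+ ('C(m, 2) + m * m + 'C(i.+2, 2))
     * w ^+ ('C(m, 2) + m + m * m + 'C(i.+1, 2))); last by rewrite !exprD; ring.
have b2 := bin2x2 i.+1.
have b3 := binS2 i.+1.
by apply: pw_split; [apply: natA | apply: natB].
Qed.
End FJ.

Lemma eqm_sum M n (F G : 'I_n -> {poly int}) :
  (forall i, eqm M (F i) (G i)) -> eqm M (\sum_(i < n) F i) (\sum_(i < n) G i).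
Proof.
move=> h; elim/big_rec2: _ => [|i x y _ hxy]; first exact: eqm_refl.
exact: eqmD.
Qed.

Lemma eqm_prod M n (F G : 'I_n -> {poly int}) :
  (forall i, eqm M (F i) (G i)) -> eqm M (\prod_(i < n) F i) (\prod_(i < n) G i).
Proof.
move=> h; elim/big_rec2: _ => [|i x y _ hxy]; first exact: eqm_refl.
exact: eqmM.
Qed.

Definition Sj (u w : {poly int}) m :=
  \sum_(j < m.+1) u ^+ 'C(j, 2) * w ^+ 'C(j.+1, 2) +
  \sum_(l < m) u ^+ 'C(l.+2, 2) * w ^+ 'C(l.+1, 2).

Lemma term_eqm M E q a : eqm M (E * q) 1 -> eqm M (E * (q * a)) a.
Proof.
move=> h; have := eqmM h (@eqm_refl M a); rewrite mul1r.
by have -> : E * (q * a) = E * q * a by ring.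
Qed.

Lemma term_eqm0 M E q a : low M a -> eqm M (E * (q * a)) a.
Proof.
move=> h; apply: (@eqm_trans _ _ 0); first by apply/eqm0/low_mull/low_mull.
by apply/eqm_sym/eqm0.
Qed.

Lemma trunc_jtp u w M m : u * w != 0 -> w != 0 -> low 1 u -> low 1 w -> (M + M <= m)%N ->
  eqm M (pr (- (u * w)) (u * w) M * (pr u (u * w) m * pr w (u * w) m)) (Sj u w m).
Proof.
move=> huw hw hu hwl hm.
have hQ : low 1 (u * w) by apply: low_mulr.
rewrite finite_jtp // /Sj mulrDr !big_distrr /=.
apply: eqmD; apply: eqm_sum => i; rewrite -!mulrA; have hi := ltn_ord i.
  case: (leqP M i) => hMi.
    apply: term_eqm0; apply: (@low_mono _ ('C(i, 2) + 'C(i.+1, 2))).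
      by rewrite binS2; lia.
    by apply: low_mul; apply: low_exp.
  by apply: term_eqm; apply: qbin_lim => //; lia.
case: (leqP M i.+1) => hMi.
  apply: term_eqm0; apply: (@low_mono _ ('C(i.+2, 2) + 'C(i.+1, 2))).
    by rewrite binS2; lia.
  by apply: low_mul; apply: low_exp.
by apply: term_eqm; apply: qbin_lim => //; lia.
Qed.

Lemma prL1 a b b2 ab T : b2 = b ^+ 2 -> ab = a * b ->
  pr a b (T + T) = pr a b2 T * pr ab b2 T.
Proof.
move=> -> ->; elim: T => [|T IH]; first by rewrite !pr_0 mulr1.
rewrite addnS addSn !pr_S IH -!exprM !mul2n -!addnn (exprS b (T + T)); ring.
Qed.

Lemma prL3 a b b3 ab ab2 T : b3 = b ^+ 3 -> ab = a * b -> ab2 = a * b ^+ 2 ->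
  pr a b (T + T + T) = pr a b3 T * pr ab b3 T * pr ab2 b3 T.
Proof.
move=> -> -> ->; elim: T => [|T IH]; first by rewrite !pr_0 !mulr1.
rewrite !addnS !addSn !pr_S IH -!exprM.
have -> : (3 * T = T + T + T)%N by lia.
rewrite !exprS; ring.
Qed.

Lemma prL2 a b a2 b2 T : a2 = - a ^+ 2 -> b2 = b ^+ 2 ->
  pr a b T * pr (- a) b T = pr a2 b2 T.
Proof.
move=> -> ->; rewrite /pr -big_split; apply: eq_bigr => i _ /=.
rewrite -exprM mulnC exprM; ring.
Qed.

Notation X := ('X : {poly int}).

Lemma lowX1 k : (0 < k)%N -> low 1 (X ^+ k). Proof. exact: low1Xn. Qed.
Lemma lowNX1 k : (0 < k)%N -> low 1 (- X ^+ k). Proof. exact: low1NXn. Qed.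

Lemma lowX : low 1 X. Proof. by have := @lowX1 1 isT; rewrite expr1. Qed.
Lemma lowNX : low 1 (- X). Proof. by have := @lowNX1 1 isT; rewrite expr1. Qed.

Lemma trM a b M K : low 1 a -> low 1 b -> (M <= K)%N -> eqm M (pr a b K) (pr a b M).
Proof. by move=> ha hb h; apply: pr_trunc. Qed.

Section Core.
Variable M : nat.
Let m := (M + M)%N.
Let P a b := pr a b M.

Lemma E1_split : eqm M (pr (- X) X M)
  (P (- X) (X ^+ 6) * P (- X ^+ 3) (X ^+ 6) * P (- X ^+ 5) (X ^+ 6) * P (- X ^+ 2) (X ^+ 2)).
Proof.
apply: eqm_trans (eqm_sym (@trM _ _ M (M + M + M + (M + M + M)) _ _ _)) _;
  [exact: lowNX | exact: lowX | lia |].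
rewrite (@prL1 _ _ (X ^+ 2) (- X ^+ 2)); [|by ring|by ring].
rewrite (@prL3 _ _ (X ^+ 6) (- X ^+ 3) (- X ^+ 5)); [|by ring|by ring|by ring].
apply: eqmM; first exact: eqm_refl.
by apply: trM; [exact: lowNX1 | exact: lowX1 | lia].
Qed.

Lemma E6_split : eqm M (P (- X ^+ 6) (X ^+ 6))
  (P (X ^+ 3) (X ^+ 12) * P (X ^+ 9) (X ^+ 12) * P (- X ^+ 3) (X ^+ 6) * P (- X ^+ 12) (X ^+ 12)).
Proof.
apply: eqm_trans (eqm_sym (@trM _ _ M (M + M) _ _ _)) _;
  [exact: lowNX1 | exact: lowX1 | lia |].
rewrite (@prL1 _ _ (X ^+ 12) (- X ^+ 12)); [|by ring|by ring].
rewrite -(@prL2 (X ^+ 3) (X ^+ 6)); [|by ring|by ring].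
apply: eqmM => //; last exact: eqm_refl.
apply: eqmM => //; last exact: eqm_refl.
apply: eqm_trans (eqm_sym (@trM _ _ M (M + M) _ _ _)) _;
  [exact: lowX1 | exact: lowX1 | lia |].
rewrite (@prL1 _ _ (X ^+ 12) (X ^+ 9)); [|by ring|by ring].
exact: eqm_refl.
Qed.

End Core.

Lemma Xn_neq0 k : X ^+ k != 0.
Proof. by rewrite expf_neq0 // polyX_eq0. Qed.

Lemma NXn_neq0 k : - X ^+ k != 0.
Proof. by rewrite oppr_eq0 Xn_neq0. Qed.

Lemma core M : eqm M (Sj (- X ^+ 5) (- X) (M + M) * pr (- X ^+ 2) (X ^+ 2) M)
                     (Sj (X ^+ 3) (X ^+ 9) (M + M) * pr (- X) X M).
Proof.
have hnX : - X != 0 by have := NXn_neq0 1; rewrite expr1.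
have T1 := @trunc_jtp (- X ^+ 5) (- X) M (M + M).
rewrite (_ : (- X ^+ 5) * (- X) = X ^+ 6) in T1; last by ring.
have {}T1 := T1 (Xn_neq0 6) hnX (@lowNX1 5 isT) lowNX (leqnn _).
have T2 := @trunc_jtp (X ^+ 3) (X ^+ 9) M (M + M).
rewrite (_ : (X ^+ 3) * (X ^+ 9) = X ^+ 12) in T2; last by ring.
have {}T2 := T2 (Xn_neq0 12) (Xn_neq0 9) (@lowX1 3 isT) (@lowX1 9 isT) (leqnn _).
have a5 := @trM (- X ^+ 5) (X ^+ 6) M (M + M) (@lowNX1 5 isT) (@lowX1 6 isT) (leq_addr _ _).
have a1 := @trM (- X) (X ^+ 6) M (M + M) lowNX (@lowX1 6 isT) (leq_addr _ _).
have b3 := @trM (X ^+ 3) (X ^+ 12) M (M + M) (@lowX1 3 isT) (@lowX1 12 isT) (leq_addr _ _).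
have b9 := @trM (X ^+ 9) (X ^+ 12) M (M + M) (@lowX1 9 isT) (@lowX1 12 isT) (leq_addr _ _).
have e6 := @E6_split M.
have e1 := @E1_split M.
set A5 := pr (- X ^+ 5) (X ^+ 6) M in a5 e1 *.
set A1 := pr (- X) (X ^+ 6) M in a1 e1 *.
set C3 := pr (- X ^+ 3) (X ^+ 6) M in e1 e6 *.
set B3 := pr (X ^+ 3) (X ^+ 12) M in b3 e6 *.
set B9 := pr (X ^+ 9) (X ^+ 12) M in b9 e6 *.
set E2 := pr (- X ^+ 2) (X ^+ 2) M in e1 *.
set E12 := pr (- X ^+ 12) (X ^+ 12) M in e6 *.
have L : eqm M (Sj (- X ^+ 5) (- X) (M + M) * E2) (B3 * B9 * C3 * E12 * (A5 * A1) * E2).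
  apply: eqmM; last exact: eqm_refl.
  apply: eqm_trans (eqm_sym T1) _.
  by apply: eqmM => //; apply: eqmM.
have R : eqm M (Sj (X ^+ 3) (X ^+ 9) (M + M) * pr (- X) X M) (E12 * (B3 * B9) * (A1 * C3 * A5 * E2)).
  apply: eqmM => //.
  apply: eqm_trans (eqm_sym T2) _.
  by apply: eqmM; [exact: eqm_refl| apply: eqmM].
apply: eqm_trans L (eqm_trans _ (eqm_sym R)).
rewrite (_ : B3 * B9 * C3 * E12 * (A5 * A1) * E2 = E12 * (B3 * B9) * (A1 * C3 * A5 * E2)); last by ring.
exact: eqm_refl.
Qed.

Definition G (k : nat) : {poly int} :=
  \prod_(i < k) \sum_(j < k.+1) X ^+ (i.+1 * j).

Lemma G_coef k : (G k)`_k = (npartitions k)%:R.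
Proof.
rewrite /G bigA_distr_bigA /= coef_sum.
have H : forall f : {ffun 'I_k -> 'I_k.+1},
  (\prod_(i0 < k) X ^+ (i0.+1 * f i0))`_k = (k == (\sum_(i0 < k) i0.+1 * f i0)%N)%:R.
  by move=> f; rewrite prodrXr coefXn.
rewrite (eq_bigr _ (fun f _ => H f)).
rewrite /npartitions -sum1_card natr_sum [RHS]big_mkcond /=.
apply: eq_bigr => f _; rewrite inE eq_sym.
by case: (_ == _).
Qed.

Lemma G_inv k : eqm k.+1 (G k * pr (- X) X k) 1.
Proof.
rewrite /G /pr -big_split /=.
apply: (@eqm_trans _ _ (\prod_(i < k) (1 : {poly int}))); last by rewrite big1 //; exact: eqm_refl.
apply: eqm_prod => i.
have e := subrX1 (X ^+ i.+1) k.+1.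
have -> : (\sum_(j < k.+1) X ^+ (i.+1 * j)) * (1 + - X * X ^+ i) = 1 - (X ^+ i.+1) ^+ k.+1.
  under eq_bigr => j _ do rewrite exprM.
  have e2 : (X ^+ i.+1) ^+ k.+1 = (X ^+ i.+1 - 1) * (\sum_(j < k.+1) (X ^+ i.+1) ^+ j) + 1
    by rewrite -e subrK.
  rewrite e2 exprS; ring.
rewrite /eqm (_ : 1 - (X ^+ i.+1) ^+ k.+1 - 1 = - X ^+ (i.+1 * k.+1)); last first.
  by rewrite -exprM; ring.
apply: lowN; apply: (@low_mono _ (i.+1 * k.+1)); first by nia.
exact: lowXn.
Qed.

Definition Pq (M : nat) : {poly int} := \poly_(k < M) (npartitions k)%:R.

Lemma Pq_inv M : eqm M (Pq M * pr (- X) X M) 1.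
Proof.
have [V HV] := @eqm_inv M (pr (- X) X M) (pr_low1 _ _ lowNX).
suff hV : eqm M (Pq M) V.
  apply: eqm_trans HV; rewrite mulrC; have := eqmM (@eqm_refl M (pr (- X) X M)) hV; apply.
move=> k hk; rewrite coefB /Pq coef_poly hk.
have h : eqm k.+1 V (G k).
  have t' := @pr_trunc k.+1 (- X) X k M lowNX lowX (leqnn _) (ltnW hk).
  have h1 : eqm k.+1 (G k * (pr (- X) X M * V)) (G k).
    rewrite -[X in eqm _ _ X]mulr1; apply: eqmM; first exact: eqm_refl.
    exact: eqm_mono hk HV.
  apply: eqm_trans (eqm_sym _) h1.
  rewrite mulrA -[X in eqm _ _ X]mul1r; apply: eqmM; last exact: eqm_refl.
  have := (eqm_trans (eqmM (@eqm_refl _ (G k)) t') (@G_inv k)); apply.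
by rewrite (eqm_coef h (ltnSn k)) G_coef subrr.
Qed.

Lemma eqm_comp2 M a b : eqm M a b -> eqm M (a \Po X ^+ 2) (b \Po X ^+ 2).
Proof.
move=> h i hi; rewrite -comp_polyB coef_comp_poly_Xn //; case: ifP => // _.
by apply: h; apply: leq_ltn_trans (leq_div i 2) hi.
Qed.

Lemma pr_comp2 M : pr (- X) X M \Po X ^+ 2 = pr (- X ^+ 2) (X ^+ 2) M.
Proof.
rewrite /pr rmorph_prod; apply: eq_bigr => i _.
by rewrite rmorphD rmorph1 rmorphM rmorphN rmorphXn /= comp_polyX.
Qed.

Definition Pq2 M := Pq M \Po X ^+ 2.

Lemma Pq2_inv M : eqm M (Pq2 M * pr (- X ^+ 2) (X ^+ 2) M) 1.
Proof.
have h := eqm_comp2 (@Pq_inv M).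
by rewrite rmorphM rmorph1 /= pr_comp2 in h.
Qed.

Lemma lowZ k (c : int) p : low k p -> low k (c *: p).
Proof. by move=> h i hi; rewrite coefZ h ?mulr0. Qed.

Lemma sum_trunc M N N' (F : nat -> {poly int}) : (N <= N')%N ->
  (forall j, (N <= j)%N -> low M (F j)) ->
  eqm M (\sum_(j < N') F j) (\sum_(j < N) F j).
Proof.
move=> hN hF; elim: N' hN => [|N' IH] hN.
  have -> : N = 0%N by lia. exact: eqm_refl.
case: (ltnP N N'.+1) => h; last first.
  have -> : N = N'.+1 by lia. exact: eqm_refl.
rewrite big_ord_recr /=.
rewrite -[X in eqm _ _ X]addr0; apply: eqmD; first by apply: IH; lia.
by apply/eqm0/hF; lia.
Qed.

Lemma negXpow c a : (- X ^+ c) ^+ a = ((-1) ^+ a : int) *: X ^+ (c * a).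
Proof. by rewrite [LHS]exprNn -exprM -mul_polyC rmorphXn rmorphN rmorph1 mulnC. Qed.

Lemma negXpow2 c d a b : (- X ^+ c) ^+ a * (- X ^+ d) ^+ b =
  ((-1) ^+ (a + b) : int) *: X ^+ (c * a + d * b).
Proof. by rewrite !negXpow -scalerAl -scalerAr scalerA -!exprD. Qed.

Definition ThetaP N : {poly int} :=
  1 + \sum_(j < N) ((-1) ^+ j.+1 : int) *:
        (X ^+ (j.+1 * (3 * j.+1 - 2)) + X ^+ (j.+1 * (3 * j.+1 + 2))).

Lemma sign_eq a b : odd a = odd b -> ((-1) ^+ a : int) = (-1) ^+ b.
Proof. by move=> h; rewrite -signr_odd h signr_odd. Qed.

Lemma Theta_Sj m : Sj (- X ^+ 5) (- X ^+ 1) m = ThetaP m.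
Proof.
rewrite /Sj /ThetaP big_ord_recl /= !expr0 mulr1 -addrA; congr (_ + _).
rewrite -big_split /=; apply: eq_bigr => j _.
rewrite !negXpow2 scalerDr /bump /= !add1n; congr (_ + _).
  have h1 := binS2 j.+1; have h2 := bin2x2 j.+1.
  congr (_ *: X ^+ _).
    apply: sign_eq.
    rewrite (_ : ('C(j.+1, 2) + 'C(j.+2, 2) = j.+1 * j.+1)%N); last by simpl in h2; nia.
    by rewrite oddM andbb.
  by simpl in h2; nia.
have h1 := binS2 j.+1; have h2 := bin2x2 j.+1.
congr (_ *: X ^+ _).
  apply: sign_eq.
  rewrite (_ : ('C(j.+2, 2) + 'C(j.+1, 2) = j.+1 * j.+1)%N); last by simpl in h2; nia.
  by rewrite oddM andbb.
by simpl in h2; nia.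
Qed.

Lemma Theta_trunc M N N' : (M <= N)%N -> (N <= N')%N -> eqm M (ThetaP N') (ThetaP N).
Proof.
move=> h1 h2; apply: eqmD; first exact: eqm_refl.
apply: (sum_trunc (F := fun j => ((-1) ^+ j.+1 : int) *:
        (X ^+ (j.+1 * (3 * j.+1 - 2)) + X ^+ (j.+1 * (3 * j.+1 + 2))))) => // j hj.
apply/lowZ/lowD.
  by apply: (@low_mono _ (j.+1 * (3 * j.+1 - 2))); [nia | exact: lowXn].
by apply: (@low_mono _ (j.+1 * (3 * j.+1 + 2))); [nia | exact: lowXn].
Qed.

Definition tE (i : nat) : nat := if odd i then ((2 * i - 1) * (i - 1))%N else (i * (2 * i - 1))%N.
Definition tO (i : nat) : nat := if odd i then (i * (2 * i - 1))%N else ((2 * i - 1) * (i - 1))%N.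

Definition PsiP N : {poly int} :=
  \sum_(i < N) (X ^+ (3 * tE i.+1) + X ^+ (3 * tO i.+1)).

Lemma Psi_term k : X ^+ (3 * tE k.+1) + X ^+ (3 * tO k.+1) =
  X ^+ (3 * (k * (2 * k + 1))) + X ^+ (3 * (k.+1 * (2 * k + 1))).
Proof.
have e1 : ((2 * k.+1 - 1) * (k.+1 - 1) = k * (2 * k + 1))%N by nia.
have e2 : (k.+1 * (2 * k.+1 - 1) = k.+1 * (2 * k + 1))%N by nia.
rewrite /tE /tO e1 e2; case: ifP => _ //; exact: addrC.
Qed.

Lemma natP1 j : (3 * 'C(j, 2) + 9 * 'C(j.+1, 2) = 3 * (j * (2 * j + 1)))%N.
Proof.
have h1 := binS2 j; have h2 := bin2x2 j.
by case: j h1 h2 => [|j] //= h1 h2; nia.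
Qed.

Lemma natP2 j : (3 * 'C(j.+2, 2) + 9 * 'C(j.+1, 2) = 3 * (j.+1 * (2 * j + 1)))%N.
Proof.
have h3 := binS2 j.+1; have h4 := bin2x2 j.+1.
simpl in h4; nia.
Qed.

Lemma Psi_Sj M m : (M <= m)%N -> eqm M (Sj (X ^+ 3) (X ^+ 9) m) (PsiP m).
Proof.
move=> hm; rewrite /Sj /PsiP big_ord_recr /=.
rewrite (_ : forall a b c : {poly int}, a + b + c = (a + c) + b); last by move=> *; ring.
rewrite -[X in eqm _ _ X]addr0; apply: eqmD.
  rewrite -big_split /=; apply: eqm_sum => j.
  rewrite Psi_term -!exprM -!exprD.
  rewrite natP1 natP2; exact: eqm_refl.
apply: eqm0; rewrite -!exprM -exprD.
apply: (@low_mono _ (3 * 'C(m, 2) + 9 * 'C(m.+1, 2))); last exact: lowXn.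
by rewrite binS2; lia.
Qed.

Lemma Psi_trunc M N N' : (1 <= M)%N -> (M <= N)%N -> (N <= N')%N -> eqm M (PsiP N') (PsiP N).
Proof.
move=> h0 h1 h2.
apply: (sum_trunc (F := fun i => X ^+ (3 * tE i.+1) + X ^+ (3 * tO i.+1))) => // j hj.
rewrite Psi_term; apply: lowD.
  by apply: (@low_mono _ (3 * (j * (2 * j + 1)))); [nia | exact: lowXn].
by apply: (@low_mono _ (3 * (j.+1 * (2 * j + 1)))); [nia | exact: lowXn].
Qed.

Lemma Theta_tr M N N' : (M <= N)%N -> (M <= N')%N -> eqm M (ThetaP N) (ThetaP N').
Proof.
move=> h1 h2; case: (leqP N N') => h.
  exact/eqm_sym/Theta_trunc.
by apply: Theta_trunc => //; lia.
Qed.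

Lemma Psi_tr M N N' : (1 <= M)%N -> (M <= N)%N -> (M <= N')%N -> eqm M (PsiP N) (PsiP N').
Proof.
move=> h0 h1 h2; case: (leqP N N') => h.
  exact/eqm_sym/Psi_trunc.
by apply: Psi_trunc => //; lia.
Qed.

Lemma main_eqm M N : (1 <= M)%N -> (M <= N)%N ->
  eqm M (Pq M * ThetaP N) (Pq2 M * PsiP N).
Proof.
move=> h0 hN.
have c := @core M.
have eT := Theta_Sj (M + M); rewrite expr1 in eT; rewrite eT in c.
have hT : eqm M (ThetaP N) (ThetaP (M + M)) by apply: Theta_tr => //; lia.
have hP : eqm M (Sj (X ^+ 3) (X ^+ 9) (M + M)) (PsiP N).
  apply: eqm_trans (@Psi_Sj M (M + M) (leq_addr _ _)) _.
  by apply: Psi_tr => //; lia.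
have key : eqm M (ThetaP N * pr (- X ^+ 2) (X ^+ 2) M) (PsiP N * pr (- X) X M).
  apply: eqm_trans (eqm_trans c _).
    by apply: eqmM => //; exact: eqm_refl.
  by apply: eqmM => //; exact: eqm_refl.
have i1 := @Pq_inv M.
have i2 := @Pq2_inv M.
set E1 := pr (- X) X M in key i1.
set E2 := pr (- X ^+ 2) (X ^+ 2) M in key i2.
apply: (@eqm_trans _ _ (Pq M * ThetaP N * (Pq2 M * E2))).
  rewrite -[X in eqm _ X _]mulr1; apply: eqmM; [exact: eqm_refl | exact: eqm_sym].
rewrite (_ : Pq M * ThetaP N * (Pq2 M * E2) = Pq M * Pq2 M * (ThetaP N * E2)); last by ring.
apply: (@eqm_trans _ _ (Pq M * Pq2 M * (PsiP N * E1))).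
  by apply: eqmM => //; exact: eqm_refl.
rewrite (_ : Pq M * Pq2 M * (PsiP N * E1) = Pq2 M * PsiP N * (Pq M * E1)); last by ring.
rewrite -[X in eqm _ _ X]mulr1; apply: eqmM => //; exact: eqm_refl.
Qed.

Lemma p_neg z : z < 0 -> p z = 0%N.
Proof. by case: z. Qed.

Lemma coefPqX M e n0 : (n0 < M)%N -> (Pq M * X ^+ e)`_n0 = (p (Posz n0 - Posz e))%:Z.
Proof.
move=> hn; rewrite coefMXn; case: ifP => h.
  by rewrite p_neg //; lia.
rewrite subzn; last by lia.
by rewrite /Pq coef_poly (_ : (n0 - e < M)%N) ?natz //; lia.
Qed.

Lemma Pq_coef M n0 : (n0 < M)%N -> (Pq M)`_n0 = (p (Posz n0))%:Z.
Proof. by move=> h; rewrite /Pq coef_poly h natz. Qed.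

Lemma claimL M N n0 : (n0 < M)%N -> (Pq M * ThetaP N)`_n0 = L_partial N (Posz n0).
Proof.
move=> hn; rewrite /ThetaP /L_partial mulrDr mulr1 coefD Pq_coef //; congr (_ + _).
rewrite big_add1 /= big_mkord mulr_sumr coef_sum; apply: eq_bigr => j _.
rewrite -scalerAr coefZ mulrDr coefD !coefPqX //.
congr (_ * (_ + _)); congr (Posz (p _)); lia.
Qed.

Lemma divz2_neg (z : int) : z < 0 -> (z %/ 2)%Z < 0.
Proof. by move=> h; rewrite ltNge divz_ge0 // -ltNge. Qed.

Lemma coefPq2X M e n0 : (n0 < M)%N ->
  (Pq2 M * X ^+ e)`_n0 = if odd (n0 + e) then 0 else (p ((Posz n0 - Posz e) %/ 2)%Z)%:Z.
Proof.
move=> hn; rewrite coefMXn; case: ifP => h.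
  by rewrite p_neg ?if_same //; apply: divz2_neg; lia.
rewrite /Pq2 coef_comp_poly_Xn // subzn; last by lia.
rewrite divz_nat.
have -> : (2 %| n0 - e)%N = ~~ odd (n0 + e).
  rewrite dvdn2 oddB; last by lia.
  by rewrite oddD; case: (odd n0); case: (odd e).
case: (odd (n0 + e)) => //=.
rewrite Pq_coef //.
by apply: leq_ltn_trans (leq_div _ _) _; lia.
Qed.

Lemma tE_even k : odd (tE k.+1) = false.
Proof.
have e1 : ((2 * k.+1 - 1) * (k.+1 - 1) = (2 * k + 1) * k)%N by nia.
have e2 : (k.+1 * (2 * k.+1 - 1) = k.+1 * (2 * k + 1))%N by nia.
rewrite /tE e1 e2 /=; case hk : (odd k) => /=; rewrite ?oddM ?oddD ?oddM /= ?hk //=.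
Qed.

Lemma tO_odd k : odd (tO k.+1) = true.
Proof.
have e1 : ((2 * k.+1 - 1) * (k.+1 - 1) = (2 * k + 1) * k)%N by nia.
have e2 : (k.+1 * (2 * k.+1 - 1) = k.+1 * (2 * k + 1))%N by nia.
rewrite /tO e1 e2 /=; case hk : (odd k) => /=; rewrite ?oddM ?oddD ?oddM /= ?hk //=.
Qed.

Lemma te_eq k : te k.+1 = Posz (tE k.+1).
Proof.
rewrite /te /tE -signr_odd; case: ifP => h /=.
  rewrite expr1 (_ : _ * _ = Posz ((2 * k.+1 - 1) * (k.+1 - 1)) * 2); first by rewrite mulzK.
  nia.
rewrite expr0 (_ : _ * _ = Posz (k.+1 * (2 * k.+1 - 1)) * 2); first by rewrite mulzK.
nia.
Qed.

Lemma to_eq k : to k.+1 = Posz (tO k.+1).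
Proof.
rewrite /to /tO -signr_odd; case: ifP => h /=.
  rewrite expr1 (_ : _ * _ = Posz (k.+1 * (2 * k.+1 - 1)) * 2); first by rewrite mulzK.
  nia.
rewrite expr0 (_ : _ * _ = Posz ((2 * k.+1 - 1) * (k.+1 - 1)) * 2); first by rewrite mulzK.
nia.
Qed.

Lemma claimR M N n0 : (n0 < M)%N ->
  (Pq2 M * PsiP N)`_n0 = if odd n0 then R_partial to N (Posz n0) else R_partial te N (Posz n0).
Proof.
move=> hn; rewrite /PsiP /R_partial mulr_sumr coef_sum.
case: ifP => ho; rewrite big_add1 /= big_mkord; apply: eq_bigr => j _;
  rewrite mulrDr coefD !coefPq2X // !oddD ?tE_even ?tO_odd ho /=.
  by rewrite add0r to_eq; congr (Posz (p (_ %/ _)%Z)); lia.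
by rewrite addr0 te_eq; congr (Posz (p (_ %/ _)%Z)); lia.
Qed.

Lemma neg_case N k :
  L_partial N (Negz k) = 0 /\ R_partial te N (Negz k) = 0 /\ R_partial to N (Negz k) = 0.
Proof.
split; [|split].
- rewrite /L_partial /= add0r big_add1 /= big1 // => j _.
  by rewrite !p_neg ?addr0 ?mulr0 //; rewrite NegzE; nia.
- rewrite /R_partial big_add1 /= big1 // => j _.
  by rewrite p_neg // divz2_neg // te_eq NegzE; lia.
- rewrite /R_partial big_add1 /= big1 // => j _.
  by rewrite p_neg // divz2_neg // to_eq NegzE; lia.
Qed.

Theorem theorem4 (n : int) (N : nat) : (`|n| < N)%N ->
  (~~ odd `|n|%N -> L_partial N n = R_partial te N n) /\
  (odd `|n|%N -> L_partial N n = R_partial to N n).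
Proof.
case: n => [n0|k] hN /=; last first.
  by have [-> [-> ->]] := neg_case N k.
have hm := @main_eqm n0.+1 N (ltn0Sn _) hN.
have e := eqm_coef hm (ltnSn n0).
rewrite claimL // claimR // in e.
by split => h; rewrite e ?h // (negbTE h).
Qed.
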